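(* Let $L$ be a totally ordered normal incline and let $A=(a_{ij})$ be a $3\times 3$ completely positive matrix over $L$. Then at least two of the following inequalities hold: $$a_{11}\otimes a_{23}\ge a_{12}\otimes a_{13},\qquad a_{22}\otimes a_{13}\ge a_{12}\otimes a_{23},\qquad a_{33}\otimes a_{12}\ge a_{13}\otimes a_{23}.$$
   Context: An incline is a nonempty set $L$ with binary operations $\oplus,\otimes$ such that $(L,\oplus)$ is a semilattice ($\oplus$ associative, commutative, idempotent), $(L,\otimes)$ is a semigroup, $x\otimes(y\oplus z)=(x\otimes y)\oplus(x\otimes z)$ and $x\oplus(x\otimes y)=x$ for all $x,y,z$. The order is $x\le y\iff x\oplus y=y$; $L$ is totally ordered if this order is total, and commutative if $\otimes$ is commutative. An r-ideal is a nonempty $J\subseteq L$ closed under $\oplus$ and under multiplication by arbitrary elements of $L$; a lattice ideal is a nonempty $J\subseteq L$ closed under $\oplus$ and downward closed. A commutative incline $L$ is normal if it has an additive identity $\mathbf{0}$ and a multiplicative identity $\mathbf{1}$ and: every singly generated r-ideal is a lattice ideal (LI-property); for each $x$ there is a unique $c$ with $c\otimes c=x$; $x\otimes y\le(x\otimes x)\oplus(y\otimes y)$ for all $x,y$. Matrix product: $(BC)_{ij}=\bigoplus_k b_{ik}\otimes c_{kj}$; $B^T$ is the transpose. $A$ is completely positive if $A=BB^T$ for some $3\times k$ matrix $B$ over $L$ all of whose entries are of the form $c\otimes c$. *)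

(* Defs.v *)
From Stdlib Require Import List.
Import ListNotations.

Record incline := Incline {
  car :> Type;
  iadd : car -> car -> car;
  imul : car -> car -> car;
  iadd_assoc : forall x y z, iadd x (iadd y z) = iadd (iadd x y) z;
  iadd_comm : forall x y, iadd x y = iadd y x;
  iadd_idem : forall x, iadd x x = x;
  imul_assoc : forall x y z, imul x (imul y z) = imul (imul x y) z;
  imul_distl : forall x y z, imul x (iadd y z) = iadd (imul x y) (imul x z);
  iabsorb : forall x y, iadd x (imul x y) = x
}.

Arguments iadd {i}.
Arguments imul {i}.

Section InclineDefs.
Variable L : incline.

Definition ile (x y : L) : Prop := iadd x y = y.

Definition totally_ordered : Prop := forall x y : L, ile x y \/ ile y x.

Definition commutative : Prop := forall x y : L, imul x y = imul y x.

(* r-ideal: nonempty, closed under oplus, and under multiplication by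
   arbitrary elements of L (commutative setting; we require both sides). *)
Definition r_ideal (J : L -> Prop) : Prop :=
  (exists x, J x) /\
  (forall x y, J x -> J y -> J (iadd x y)) /\
  (forall x r, J x -> J (imul r x) /\ J (imul x r)).

Definition lattice_ideal (J : L -> Prop) : Prop :=
  (exists x, J x) /\
  (forall x y, J x -> J y -> J (iadd x y)) /\
  (forall x y, J y -> ile x y -> J x).

Definition gen_r_ideal (a : L) (x : L) : Prop :=
  forall J, r_ideal J -> J a -> J x.

Definition LI_property : Prop := forall a : L, lattice_ideal (gen_r_ideal a).

Definition is_zero (z : L) : Prop := forall x, iadd z x = x.
Definition is_one (u : L) : Prop := forall x, imul u x = x /\ imul x u = x.

Definition normal : Prop :=
  commutative /\
  (exists z : L, is_zero z) /\
  (exists u : L, is_one u) /\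
  LI_property /\
  (forall x : L, exists c : L, imul c c = x /\ forall c', imul c' c' = x -> c' = c) /\
  (forall x y : L, ile (imul x y) (iadd (imul x x) (imul y y))).

Definition is_square (x : L) : Prop := exists c : L, x = imul c c.

(* 3 x k matrices B are given by their k columns (b_1j, b_2j, b_3j);
   A = B B^T means a_ij = (+)_k b_ik (x) b_jk.  The empty sum (k = 0) is the
   additive identity z. *)
Definition bigsum (z : L) (l : list L) : L := fold_right iadd z l.

Definition completely_positive (z : L) (A : nat -> nat -> L) : Prop :=
  exists cols : list (L * L * L),
    (forall c, In c cols ->
       let '(b1, b2, b3) := c in is_square b1 /\ is_square b2 /\ is_square b3) /\
    forall i j, i < 3 -> j < 3 ->
      A i j = bigsum z (map (fun c : L * L * L =>
                   let '(b1, b2, b3) := c in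
                   let b := fun n => match n with 0 => b1 | 1 => b2 | _ => b3 end in
                   imul (b i) (b j)) cols).

End InclineDefs.

(* Main.v *)
Require Import Defs.
From Stdlib Require Import List.
Import ListNotations.

Lemma ile_refl (L : incline) (x : L) : ile L x x.
Proof. unfold ile. apply iadd_idem. Qed.

Lemma ile_trans (L : incline) (x y w : L) : ile L x y -> ile L y w -> ile L x w.
Proof. unfold ile; intros H1 H2. rewrite <- H2, iadd_assoc, H1. reflexivity. Qed.

Lemma mono_l (L : incline) (x y y' : L) : ile L y y' -> ile L (imul x y) (imul x y').
Proof. unfold ile; intros H. rewrite <- imul_distl, H. reflexivity. Qed.

Lemma mono_r (L : incline) (x y y' : L) : commutative L ->
  ile L y y' -> ile L (imul y x) (imul y' x).
Proof. intros C H. rewrite (C y), (C y'). apply mono_l; auto. Qed.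

Lemma mul_mono (L : incline) (x x' y y' : L) : commutative L ->
  ile L x x' -> ile L y y' -> ile L (imul x y) (imul x' y').
Proof. intros C H1 H2. apply ile_trans with (imul x' y).
  apply mono_r; auto. apply mono_l; auto. Qed.

Lemma ile_addl (L : incline) (x r : L) : ile L x (iadd x r).
Proof. unfold ile. rewrite iadd_assoc, iadd_idem. reflexivity. Qed.

Lemma ile_addr (L : incline) (x y r : L) : ile L x r -> ile L x (iadd y r).
Proof. unfold ile; intros H. rewrite iadd_assoc, (iadd_comm _ x y), <- iadd_assoc, H.
  reflexivity. Qed.

Lemma bigsum_ge (L : incline) (z : L) {T} (f : T -> L) (l : list T) c :
  In c l -> ile L (f c) (bigsum L z (map f l)).
Proof.
  induction l as [|a l IH]; simpl; [tauto|].
  intros [<-|H]. apply ile_addl. apply ile_addr; auto.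
Qed.

Lemma bigsum_attain (L : incline) (z : L) {T} (f : T -> L) (l : list T) :
  totally_ordered L -> is_zero L z ->
  bigsum L z (map f l) = z \/ exists c, In c l /\ bigsum L z (map f l) = f c.
Proof.
  intros TO Z. induction l as [|a l IH]; simpl; [auto|].
  right. destruct IH as [E|[c [Hc E]]]; unfold bigsum in *; rewrite E.
  - exists a; split; auto. rewrite iadd_comm. apply Z.
  - destruct (TO (f a) (f c)) as [H|H].
    + exists c; split; auto.
    + exists a; split; auto. rewrite iadd_comm. exact H.
Qed.

Lemma zero_mul (L : incline) (z y : L) : is_zero L z -> imul z y = z.
Proof. intros Z. pose proof (iabsorb L z y) as H. rewrite Z in H. exact H. Qed.

Lemma key (L : incline) (x y mii mjj mik mjk : L) :
  totally_ordered L -> commutative L ->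
  ile L (imul x x) mii -> ile L (imul y y) mjj ->
  ile L (imul (imul x y) mik) (imul mii mjk) \/
  ile L (imul (imul x y) mjk) (imul mjj mik).
Proof.
  intros TO C Hx Hy.
  destruct (TO (imul y mik) (imul x mjk)) as [H|H].
  - left. rewrite <- imul_assoc. apply ile_trans with (imul x (imul x mjk)).
    apply mono_l; auto. rewrite imul_assoc. apply mono_r; auto.
  - right. rewrite (C x y), <- imul_assoc. apply ile_trans with (imul y (imul y mik)).
    apply mono_l; auto. rewrite imul_assoc. apply mono_r; auto.
Qed.

Definition Fc (L : incline) (i j : nat) (c : L * L * L) : L :=
  let '(b1, b2, b3) := c in
  let b := fun n => match n with 0 => b1 | 1 => b2 | _ => b3 end in
  imul (b i) (b j).

Lemma pivot (L : incline) (z : L) (A : nat -> nat -> L) (i j k : nat) :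
  totally_ordered L -> commutative L -> is_zero L z ->
  (exists cols : list (L * L * L), forall i j, i < 3 -> j < 3 ->
      A i j = bigsum L z (map (Fc L i j) cols)) ->
  i < 3 -> j < 3 -> k < 3 ->
  ile L (imul (A i j) (A i k)) (imul (A i i) (A j k)) \/
  ile L (imul (A i j) (A j k)) (imul (A j j) (A i k)).
Proof.
  intros TO C Z [cols HA] Hi Hj Hk.
  destruct (bigsum_attain L z (Fc L i j) cols TO Z) as [E|[c [Hc E]]];
    rewrite <- (HA i j Hi Hj) in E.
  - left. rewrite E, zero_mul by auto. unfold ile. apply Z.
  - destruct c as [[b1 b2] b3].
    set (b := fun n => match n with 0 => b1 | 1 => b2 | _ => b3 end).
    assert (Hf : forall i j, Fc L i j (b1, b2, b3) = imul (b i) (b j)) by reflexivity.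
    rewrite Hf in E. rewrite E.
    apply key; auto.
    + rewrite (HA i i Hi Hi), <- Hf. apply bigsum_ge; auto.
    + rewrite (HA j j Hj Hj), <- Hf. apply bigsum_ge; auto.
Qed.

Theorem mainTheorem9 (L : incline) (z : L) (A : nat -> nat -> L) :
  totally_ordered L -> normal L -> is_zero L z ->
  completely_positive L z A ->
  let h1 := ile L (imul (A 0 1) (A 0 2)) (imul (A 0 0) (A 1 2)) in
  let h2 := ile L (imul (A 0 1) (A 1 2)) (imul (A 1 1) (A 0 2)) in
  let h3 := ile L (imul (A 0 2) (A 1 2)) (imul (A 2 2) (A 0 1)) in
  (h1 /\ h2) \/ (h1 /\ h3) \/ (h2 /\ h3).
Proof.
  intros TO N Z [cols [_ HA]] h1 h2 h3.
  destruct N as [C _].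
  assert (HA' : exists cols : list (L * L * L), forall i j, i < 3 -> j < 3 ->
      A i j = bigsum L z (map (Fc L i j) cols)).
  { exists cols. intros i j Hi Hj. rewrite (HA i j Hi Hj). reflexivity. }
  assert (S : forall i j, i < 3 -> j < 3 -> A j i = A i j).
  { intros i j Hi Hj. rewrite (HA i j Hi Hj), (HA j i Hj Hi). f_equal.
    apply map_ext. intros [[b1 b2] b3]. apply C. }
  assert (P1 : h1 \/ h2).
  { apply (pivot L z A 0 1 2); auto. }
  assert (P2 : h1 \/ h3).
  { destruct (pivot L z A 0 2 1 TO C Z HA') as [H|H]; auto.
    - left. unfold h1. rewrite (C (A 0 1)). rewrite (S 1 2) in H by auto. exact H.
    - right. unfold h3. rewrite (S 1 2) in H by auto. exact H. }
  assert (P3 : h2 \/ h3).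
  { destruct (pivot L z A 1 2 0 TO C Z HA') as [H|H]; auto.
    - left. unfold h2. rewrite (S 0 1), (S 0 2) in H by auto.
      rewrite (C (A 0 1)). exact H.
    - right. unfold h3. rewrite (S 0 1), (S 0 2) in H by auto.
      rewrite (C (A 0 2)). exact H. }
  tauto.
Qed.
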